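(* Let $1\le p<\infty$ and consider $\ell_p$ as a Banach algebra under coordinatewise multiplication. Let $w=(w(n))_{n\ge2}$ be a bounded sequence of non-zero complex numbers and $B_w(x(1),x(2),x(3),\ldots)=(w(2)x(2),w(3)x(3),w(4)x(4),\ldots)$ the weighted backward shift on $\ell_p$. Assume that $|w(n)|\ge1$ for all $n\ge2$ and that, for some integer $m\ge2$, $\sum_{n=2}^\infty\frac{1}{|w(2)w(3)\cdots w(n)|^{p/m}}=\infty$. Then for any $x\in\ell_p$, $x^m$ is not frequently hypercyclic for $B_w$. In particular, $B_w$ does not have any frequently hypercyclic algebra.
   Context: A vector $x$ is frequently hypercyclic for $T$ if for every non-empty open $U$ the set $\{n\in\mathbb N_0:T^nx\in U\}$ has positive lower density $\liminf_{N\to\infty}\frac{\mathrm{card}(A\cap[0,N])}{N+1}$. A frequently hypercyclic algebra is a subalgebra $\ne\{0\}$ all of whose non-zero elements are frequently hypercyclic. Powers are coordinatewise. *)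

(* Defs.v *)
From HB Require Import structures.
From mathcomp Require Import all_boot all_order all_algebra.
From mathcomp Require Import all_classical all_reals all_analysis.
From mathcomp Require Import complex.
Set Implicit Arguments. Unset Strict Implicit. Unset Printing Implicit Defensive.
Import Order.TTheory GRing.Theory Num.Theory.
Local Open Scope classical_set_scope.
Local Open Scope ring_scope.

Section Defs.
Variable R : realType.

Definition cmod (z : R[i]) : R := ComplexField.Normc.normc z.

(* Sequences x : nat -> R[i] are indexed from 0: x k is the paper's x(k+1). *)

Definition lpsum (p : R) (x : nat -> R[i]) : \bar R :=
  (\sum_(0 <= k <oo) ((cmod (x k)) `^ p)%:E)%E.

Definition in_lp (p : R) (x : nat -> R[i]) : Prop := (lpsum p x < +oo)%E.

(* the l_p norm (meaningful for x in l_p) *)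
Definition lpnorm (p : R) (x : nat -> R[i]) : R := (fine (lpsum p x)) `^ p^-1.

(* Weighted backward shift; w is indexed as in the paper (w n, n >= 2):
   B_w(x(1),x(2),...) = (w(2)x(2), w(3)x(3), ...), i.e. with 0-based x,
   (B_w x) k = w (k+2) * x (k+1). *)
Definition Bw (w : nat -> R[i]) (x : nat -> R[i]) : nat -> R[i] :=
  fun k => w k.+2 * x k.+1.

Definition lower_density (A : set nat) : \bar R :=
  limn_einf (fun N : nat =>
    ((\sum_(n < N.+1) (\1_A n : R)) / N.+1%:R)%:E).

(* x is frequently hypercyclic for T on l_p: for every non-empty open set U
   of l_p (equivalently, every open ball B(y, e) with y in l_p, e > 0),
   {n | T^n x ∈ U} has positive lower density. *)
Definition freq_hypercyclic (p : R) (T : (nat -> R[i]) -> (nat -> R[i]))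
    (x : nat -> R[i]) : Prop :=
  in_lp p x /\
  forall y : nat -> R[i], in_lp p y -> forall e : R, 0 < e ->
    (0 < lower_density [set n | (lpnorm p (fun k => iter n T x k - y k) < e)%R])%E.

Definition lp_subalgebra (p : R) (A : set (nat -> R[i])) : Prop :=
  [/\ A `<=` in_lp p,
      A (fun _ => 0),
      (forall x y, A x -> A y -> A (fun k => x k + y k)),
      (forall (c : R[i]) x, A x -> A (fun k => c * x k)) &
      (forall x y, A x -> A y -> A (fun k => x k * y k))].

Definition freq_hypercyclic_algebra (p : R) (T : (nat -> R[i]) -> (nat -> R[i]))
    (A : set (nat -> R[i])) : Prop :=
  [/\ lp_subalgebra p A, A <> [set fun _ => 0] &
      forall x, A x -> x <> (fun _ => 0) -> freq_hypercyclic p T x].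

End Defs.

(* Main.v *)
Require Import Defs.
From HB Require Import structures.
From mathcomp Require Import all_boot all_order all_algebra.
From mathcomp Require Import all_classical all_reals all_analysis.
From mathcomp Require Import complex.
From mathcomp Require Import ring lra.
Import Order.TTheory GRing.Theory Num.Theory.
Local Open Scope classical_set_scope.
Local Open Scope ring_scope.
Section Helpers.
Local Open Scope complex_scope.
Variable R : realType.
Implicit Types z : R[i].

Lemma normC_cmod z : `|z| = (cmod z)%:C.
Proof. by case: z. Qed.

Lemma cmod_ge0 z : 0 <= cmod z.
Proof. by case: z => a b; rewrite /cmod /=; exact: sqrtr_ge0. Qed.

Lemma cmodM z1 z2 : cmod (z1 * z2) = cmod z1 * cmod z2.
Proof. by rewrite /cmod ComplexField.Normc.normcM. Qed.

Lemma cmod1 : cmod (1 : R[i]) = 1.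
Proof. exact: ComplexField.Normc.normc1. Qed.

Lemma cmodX z n : cmod (z ^+ n) = cmod z ^+ n.
Proof. by elim: n => [|n IH]; rewrite ?expr0 ?cmod1 // !exprS cmodM IH. Qed.

Lemma cmod_prod (I : Type) (r : seq I) (P : pred I) (F : I -> R[i]) :
  cmod (\prod_(i <- r | P i) F i) = \prod_(i <- r | P i) cmod (F i).
Proof.
elim: r => [|a r IH]; first by rewrite !big_nil cmod1.
by rewrite !big_cons; case: (P a); rewrite ?cmodM IH.
Qed.

Lemma cmodB z1 z2 : cmod z1 - cmod z2 <= cmod (z1 - z2).
Proof. by rewrite -lecR rmorphB /= -!normC_cmod lerB_dist. Qed.

Lemma cmod0 : cmod (0 : R[i]) = 0.
Proof. exact: ComplexField.Normc.normc0. Qed.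

Lemma powRVl (a r : R) : 0 < a -> (a^-1) `^ r = (a `^ r)^-1.
Proof.
move=> a0; have h : a `^ r * (a^-1) `^ r = 1.
  by rewrite -powRM ?invr_ge0 ?ltW // divff ?gt_eqF // powR1.
have ne : a `^ r != 0 by rewrite gt_eqF // powR_gt0.
by apply: (mulfI ne); rewrite h divff.
Qed.

Lemma series_le_bound (f : nat -> R) (B : R) : (forall k, 0 <= f k) ->
  (forall N, \sum_(k < N) f k <= B) -> (\sum_(0 <= k <oo) (f k)%:E <= B%:E)%E.
Proof.
move=> f0 hB; apply: lime_le.
  by apply: is_cvg_nneseries => n _ _; rewrite lee_fin.
apply: nearW => N /=; rewrite sumEFin lee_fin big_mkord.
by rewrite hB.
Qed.

Lemma series_partial_le (f : nat -> R) : (forall k, 0 <= f k) ->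
  (\sum_(0 <= k <oo) (f k)%:E < +oo)%E ->
  forall N, \sum_(k < N) f k <= fine (\sum_(0 <= k <oo) (f k)%:E)%E.
Proof.
move=> f0 hfin N.
have h := @nneseries_lim_ge R (fun k => (f k)%:E) xpredT 0 N (fun n _ _ => f0 n).
have s0 : (0 <= \sum_(0 <= k <oo) (f k)%:E)%E by apply: nneseries_ge0 => n _ _; rewrite lee_fin.
have hf : (\sum_(0 <= k <oo) (f k)%:E)%E \is a fin_num by rewrite ge0_fin_numE.
by rewrite -lee_fin fineK // -sumEFin big_mkord in h *.
Qed.

Lemma series_unbounded (f : nat -> R) : (forall k, 0 <= f k) ->
  (\sum_(0 <= k <oo) (f k)%:E = +oo)%E ->
  forall B, exists N, B < \sum_(k < N) f k.
Proof.
move=> f0 hinf B; apply/not_existsP => hn.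
have : (\sum_(0 <= k <oo) (f k)%:E <= B%:E)%E.
  by apply: series_le_bound => // N; rewrite leNgt; apply/negP => h; apply: (hn N).
by rewrite hinf.
Qed.


Lemma iterBw (w : nat -> R[i]) y n k :
  iter n (Bw w) y k = (\prod_(j < n) w (k + j).+2) * y (k + n)%N.
Proof.
elim: n k => [|n IH] k /=; first by rewrite big_ord0 mul1r addn0.
rewrite /Bw IH big_ord_recl /= addn0 mulrA; congr (_ * _ * y _).
  by apply: eq_bigr => j _; rewrite addSn addnS.
by rewrite addSn addnS.
Qed.

Lemma sum_shift_le (f : nat -> R) a N : (forall k, 0 <= f k) ->
  \sum_(k < N) f (a + k)%N <= \sum_(k < a + N) f k.
Proof.
move=> f0; rewrite big_split_ord /= lerDr.
by apply: sumr_ge0.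
Qed.

Lemma cmod_prod_le (w : nat -> R[i]) M n k : (forall j, cmod (w j.+2) <= M) ->
  cmod (\prod_(j < n) w (k + j).+2) <= M ^+ n.
Proof.
move=> hM; rewrite cmod_prod.
have -> : M ^+ n = \prod_(j < n) M by rewrite prodr_const card_ord.
by apply: ler_prod => j _; rewrite cmod_ge0 hM.
Qed.


Lemma lp_iter_fin (p M : R) (w : nat -> R[i]) y n :
 0 < p -> (forall j, cmod (w j.+2) <= M) -> 0 <= M -> in_lp p y ->
 in_lp p (fun k => iter n (Bw w) y k - (if k is 0 then 1 else 0)).
Proof.
move=> p0 hM M0 hy; rewrite /in_lp /lpsum.
set L := fine (lpsum p y).
have Lp : forall N, \sum_(k < N) (cmod (y k)) `^ p <= L.
  by apply: series_partial_le => // k; apply: powR_ge0.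
have L0 : 0 <= L by have := Lp 0%N; rewrite big_ord0.
pose B := cmod (iter n (Bw w) y 0%N - 1) `^ p + (M ^+ n) `^ p * L.
apply: (le_lt_trans (@series_le_bound (fun k => cmod (iter n (Bw w) y k - (if k is 0 then 1 else 0)) `^ p) B _ _)); last exact: ltey.
  by move=> k; apply: powR_ge0.
case=> [|N]; first by rewrite big_ord0 addr_ge0 ?mulr_ge0 ?powR_ge0.
rewrite big_ord_recl /= lerD2l.
apply: (@le_trans _ _ (\sum_(k < N) (M ^+ n) `^ p * (cmod (y (n.+1 + k)%N)) `^ p)).
  apply: ler_sum => k _.
  rewrite /bump /= subr0 iterBw -powRM ?exprn_ge0 ?cmod_ge0 //.
  apply: ge0_ler_powR; first exact: ltW.
  - by rewrite nnegrE cmod_ge0.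
  - by rewrite nnegrE mulr_ge0 ?exprn_ge0 ?cmod_ge0.
  have -> : (1 + k + n = n.+1 + k)%N by rewrite add1n addSn addnC.
  by rewrite cmodM ler_wpM2r ?cmod_ge0 ?cmod_prod_le.
rewrite -mulr_sumr ler_wpM2l ?powR_ge0 //.
apply: (le_trans _ (Lp (n.+1 + N)%N)).
by apply: (@sum_shift_le (fun k => cmod (y k) `^ p)) => k; apply: powR_ge0.
Qed.

Lemma lp_e0 (p : R) : 0 < p -> in_lp p (fun k => if k is 0 then 1 else 0).
Proof.
move=> p0; rewrite /in_lp /lpsum.
apply: (le_lt_trans (@series_le_bound (fun k => cmod (if k is 0 then 1 else 0 : R[i]) `^ p) 1 _ _)); last exact: ltey.
  by move=> k; apply: powR_ge0.
case=> [|N]; first by rewrite big_ord0.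
rewrite big_ord_recl /= big1 ?addr0.
  by rewrite expr1n expr0n /= addr0 sqrtr1 powR1.
by move=> i _; rewrite expr0n /= addr0 sqrtr0 powR0 // gt_eqF.
Qed.


Lemma cmodN z : cmod (- z) = cmod z.
Proof. by case: z => a b; rewrite /cmod /= !sqrrN. Qed.

Lemma powR_pinv (a p : R) : 0 <= a -> 0 < p -> (a `^ p) `^ p^-1 = a.
Proof. by move=> a0 p0; rewrite -powRrM divff ?gt_eqF // powRr1. Qed.

Definition e0 : nat -> R[i] := fun k => if k is 0 then 1 else 0.

Lemma member_bound (p : R) (w : nat -> R[i]) (m : nat) x n :
 0 < p -> (0 < m)%N -> (forall j, 1 <= cmod (w j.+2)) ->
 in_lp p (fun k => iter n (Bw w) (fun k => x k ^+ m) k - e0 k) ->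
 lpnorm p (fun k => iter n (Bw w) (fun k => x k ^+ m) k - e0 k) < 2^-1 ->
 (2^-1) `^ (p / m%:R) * ((\prod_(j < n) cmod (w j.+2)) `^ (p / m%:R))^-1
   <= cmod (x n) `^ p.
Proof.
move=> p0 m0 w1 hfin hnorm.
set v := (fun k => _ - _) in hfin hnorm.
have h0 : cmod (v 0%N) `^ p <= fine (lpsum p v).
  have := @series_partial_le (fun k => cmod (v k) `^ p) (fun k => powR_ge0 _ _) hfin 1%N.
  by rewrite big_ord1.
have h1 : cmod (v 0%N) < 2^-1.
  apply: le_lt_trans hnorm; rewrite /lpnorm.
  rewrite -{1}(@powR_pinv (cmod (v 0%N)) p) ?cmod_ge0 //.
  apply: ge0_ler_powR => //; first by rewrite invr_ge0 ltW.
  - by rewrite nnegrE powR_ge0.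
  - by rewrite nnegrE (le_trans _ h0) // powR_ge0.
set W := \prod_(j < n) cmod (w j.+2).
have W1 : 1 <= W.
  by apply: (big_ind (fun r => 1 <= r)) => // a b ha hb; rewrite mulr_ege1.
have W0 : 0 < W by apply: lt_le_trans W1.
have h2 : 2^-1 < W * cmod (x n) ^+ m.
  have e : v 0%N = (\prod_(j < n) w j.+2) * x n ^+ m - 1.
    by rewrite /v iterBw add0n; congr (_ * _ - _); apply: eq_bigr => j _; rewrite add0n.
  have := cmodB 1 ((\prod_(j < n) w j.+2) * x n ^+ m).
  rewrite -[cmod (1 - _)]cmodN opprB -e cmod1 cmodM cmodX cmod_prod -/W => h.
  have := le_lt_trans h h1; lra.
have mR0 : (0 : R) < m%:R by rewrite ltr0n.
have -> : cmod (x n) `^ p = (cmod (x n) ^+ m) `^ (p / m%:R).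
  by rewrite -powR_mulrn ?cmod_ge0 // -powRrM mulrC divfK ?gt_eqF.
have W0' : 0 <= W^-1 by rewrite invr_ge0 ltW.
rewrite -powRVl // -powRM //.
apply: ge0_ler_powR.
- by apply: divr_ge0; apply: ltW.
- by rewrite nnegrE mulr_ge0.
- by rewrite nnegrE exprn_ge0 ?cmod_ge0.
by rewrite ler_pdivrMr // mulrC; apply: ltW.
Qed.

End Helpers.
Section Density.
Variable R : realType.

Lemma sum_mono_add (f : nat -> R) N k : (forall n, 0 <= f n) ->
  \sum_(n < N) f n <= \sum_(n < N + k) f n.
Proof.
move=> f0; elim: k => [|k IH]; first by rewrite addn0.
by rewrite addnS big_ord_recr /= (le_trans IH) // lerDl.
Qed.

Lemma density_div (A : set nat) (b : nat -> R) (d : R) (N1 : nat) :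
 0 < d -> (forall n, 0 <= b n) -> (forall n, b n.+1 <= b n) ->
 (forall N, (N1 <= N)%N -> d <= (\sum_(n < N.+1) (\1_A n : R)) / N.+1%:R) ->
 (forall B, exists N, B < \sum_(n < N) b n) ->
 forall B, exists N, B < \sum_(n < N) (\1_A n : R) * b n.
Proof.
move=> d0 b0 bdec hd hdiv B.
pose C N := \sum_(n < N) (\1_A n : R).
pose S N := \sum_(n < N) (\1_A n : R) * b n.
pose T N := \sum_(n < N) b n.
pose F N := S N - C N * b N - d * (T N - N%:R * b N).
have hC : forall N, (N1 < N)%N -> d * N%:R <= C N.
  move=> [|N] // /hd; rewrite ler_pdivlMr ?ltr0Sn //.
have Fstep : forall N, (N1 <= N)%N -> F N <= F N.+1.
  move=> N hN.
  have e : F N.+1 = F N + (C N.+1 - d * N.+1%:R) * (b N - b N.+1).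
    rewrite /F /C /S /T !big_ord_recr /= -/(C N) -/(S N) -/(T N) -addn1 natrD.
    ring.
  rewrite e lerDl mulr_ge0 // subr_ge0 ?hC //.
have Fmono : forall k, F N1 <= F (N1 + k)%N.
  elim=> [|k IH]; first by rewrite addn0.
  by rewrite (le_trans IH) // addnS Fstep // leq_addr.
have hS : forall N, (N1 < N)%N -> F N1 + d * T N <= S N.
  move=> N hN.
  have -> : S N = F N + (C N - d * N%:R) * b N + d * T N by rewrite /F; ring.
  have hF : F N1 <= F N.
    by have := Fmono (N - N1)%N; rewrite subnKC // ltnW.
  rewrite lerD2r (le_trans hF) // lerDl mulr_ge0 // subr_ge0 hC //.
have [N0 hN0] := hdiv ((B - F N1) / d).
exists (N0 + N1.+1)%N.
have hT : T N0 <= T (N0 + N1.+1)%N by apply: sum_mono_add.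
have := hS (N0 + N1.+1)%N; rewrite -/(S _) => /(_ (leq_addl _ _)) hS'.
apply: lt_le_trans hS'.
rewrite ltr_pdivrMr // in hN0.
have : B - F N1 < d * T (N0 + N1.+1)%N.
  by apply: lt_le_trans (_ : T N0 * d <= _); rewrite // mulrC ler_pM2l.
lra.
Qed.

End Density.
Section LD.
Variable R : realType.

Lemma lower_density_pos (A : set nat) : (0 < lower_density R A)%E ->
  exists d : R, 0 < d /\ exists N1, forall N, (N1 <= N)%N ->
    d <= (\sum_(n < N.+1) (\1_A n : R)) / N.+1%:R.
Proof.
rewrite /lower_density limn_einf_lim.
set u := (fun N : nat => _).
rewrite (cvg_lim _ (@cvg_einfs_sup R u)) // => /ereal_sup_gt [y [N1 _ <-]] hy.
have lb : forall N, (N1 <= N)%N -> (einfs u N1 <= u N)%E.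
  move=> N hN; apply: ereal_inf_lbound; exists N => //.
move: hy lb; case E : (einfs u N1) => [r| |] //= r0 lb.
- exists r; split; first by rewrite -lte_fin.
  by exists N1 => N /lb; rewrite /u lee_fin.
- by have := lb N1 (leqnn _); rewrite /u leNgt ltey.
Qed.

End LD.

Theorem proposition3p2 (R : realType) (p : R) (w : nat -> R[i]) (m : nat) :
  1 <= p ->
  (exists M : R, forall n : nat, (2 <= n)%N -> cmod (w n) <= M) ->
  (forall n : nat, (2 <= n)%N -> w n != 0) ->
  (forall n : nat, (2 <= n)%N -> 1 <= cmod (w n)) ->
  (2 <= m)%N ->
  (\sum_(0 <= k <oo)
     (((\prod_(2 <= j < k.+3) cmod (w j)) `^ (p / m%:R))^-1)%:E = +oo)%E ->
  (forall x : nat -> R[i], in_lp p x ->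
     ~ freq_hypercyclic p (Bw w) (fun k => x k ^+ m)) /\
  ~ (exists A : set (nat -> R[i]), freq_hypercyclic_algebra p (Bw w) A).
Proof.
move=> p1 [M hM] _ w1 m2 hdiv.
have p0 : 0 < p by apply: lt_le_trans p1.
have hM' : forall j, cmod (w j.+2) <= M by move=> j; apply: hM.
have w1' : forall j, 1 <= cmod (w j.+2) by move=> j; apply: w1.
have M0 : 0 <= M by apply: le_trans (hM' 0%N); apply: le_trans (w1' 0%N).
have m0 : (0 < m)%N by apply: leq_trans m2.
have part1 : forall x : nat -> R[i], in_lp p x ->
     ~ freq_hypercyclic p (Bw w) (fun k => x k ^+ m).
  move=> x hx [hy hfhc].
  have := hfhc (e0 R) (@lp_e0 R p p0) (2^-1) _; rewrite invr_gt0 ltr0n => /(_ erefl).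
  move=> /lower_density_pos [d [d0 [N1 hN1]]].
  set A := [set n | _] in hN1.
  pose a k := ((\prod_(2 <= j < k.+3) cmod (w j)) `^ (p / m%:R))^-1.
  have Wk : forall k, \prod_(2 <= j < k.+3) cmod (w j) = \prod_(j < k.+1) cmod (w j.+2).
    move=> k; have -> : k.+3 = (k.+1 + 2)%N by rewrite addn2.
    rewrite -{1}[2%N]add0n big_addn addnK big_mkord.
    by apply: eq_bigr => j _; rewrite addn2.
  have W1 : forall k, 1 <= \prod_(j < k) cmod (w j.+2).
    by move=> k; apply: (big_ind (fun r => 1 <= r)) => // u v hu hv; rewrite mulr_ege1.
  have pm0 : 0 <= p / m%:R by rewrite divr_ge0 ?ler0n // ltW.
  have a0 : forall k, 0 <= a k by move=> k; rewrite invr_ge0 powR_ge0.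
  have adec : forall k, a k.+1 <= a k.
    move=> k; rewrite /a !Wk.
    have P1 := W1 k.+1; have P2 := W1 k.+2.
    rewrite lef_pV2 ?posrE ?powR_gt0 ?(lt_le_trans ltr01) //.
    apply: ge0_ler_powR => //; rewrite ?nnegrE ?(le_trans ler01) //.
    by rewrite [X in _ <= X]big_ord_recr /= ler_peMr ?(le_trans ler01).
  pose b n := a n.-1.
  have bdec : forall n, b n.+1 <= b n by case=> [|n] //=; apply: adec.
  have bdiv : forall B, exists N, B < \sum_(n < N) b n.
    move=> B; have [N hN] := @series_unbounded R a a0 hdiv B.
    exists N.+1; rewrite big_ord_recl; apply: lt_le_trans hN _.
    by rewrite lerDr a0.
  have hD := @density_div R A b d N1 d0 (fun n => a0 _) bdec hN1 bdiv.
  pose K := 2^-1 `^ (p / m%:R).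
  have K0 : 0 < K by rewrite powR_gt0 // invr_gt0 ltr0n.
  pose L := fine (lpsum p x).
  have Lp : forall N, \sum_(k < N) cmod (x k) `^ p <= L.
    by apply: series_partial_le => // k; apply: powR_ge0.
  have L0 : 0 <= L by have := Lp 0%N; rewrite big_ord0.
  have bound : forall N, \sum_(n < N) (\1_A n : R) * b n <= a 0%N + K^-1 * L.
    case=> [|N].
      by rewrite big_ord0 addr_ge0 // mulr_ge0 // invr_ge0 ltW.
    rewrite big_ord_recl; apply: lerD.
      by rewrite /b /= indicE; case: (_ \in _); rewrite ?mul1r ?mul0r.
    apply: (@le_trans _ _ (\sum_(k < N) K^-1 * cmod (x (1 + k)%N) `^ p)).
      apply: ler_sum => k _; rewrite /b /bump /= indicE.
      case: (boolP (_ \in A)) => hk; last first.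
        by rewrite mul0r mulr_ge0 ?invr_ge0 ?powR_ge0 // ltW.
      rewrite mul1r ler_pdivlMl // add1n.
      have := @member_bound R p w m x k.+1 p0 m0 w1'
        (@lp_iter_fin R p M w _ k.+1 p0 hM' M0 hy) (set_mem hk).
      by rewrite /a Wk.
    have K0' : 0 <= K^-1 by rewrite invr_ge0; apply: ltW.
    rewrite -mulr_sumr ler_wpM2l //.
    apply: (le_trans _ (Lp (1 + N)%N)).
    by apply: (@sum_shift_le R (fun k => cmod (x k) `^ p)) => k; apply: powR_ge0.
  have [N hN] := hD (a 0%N + K^-1 * L).
  by have := bound N; rewrite leNgt hN.
split => //.
move=> [A [[Alp A0 Aadd Asc Amul] Ane Afhc]].
have [x [Ax xne]] : exists x, A x /\ x <> (fun _ => 0).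
  case: (pselect (exists x, A x /\ x <> (fun _ => 0))) => // hn.
  exfalso; apply: Ane; apply/seteqP; split => y /=.
    move=> Ay; case: (pselect (y = fun _ => 0)) => // hy.
    by exfalso; apply: hn; exists y.
  by move=> ->.
have Axm : forall j, A (fun k => x k ^+ j.+1).
  elim=> [|j IH].
    by have -> : (fun k => x k ^+ 1) = x by apply: funext => k; rewrite expr1.
  have -> : (fun k => x k ^+ j.+2) = (fun k => x k * x k ^+ j.+1).
    by apply: funext => k; rewrite exprS.
  exact: Amul.
have xm_ne : (fun k => x k ^+ m) <> (fun _ => 0).
  move=> h; apply: xne; apply: funext => k.
  have := congr1 (fun f => f k) h => /= /eqP.
  by rewrite expf_eq0 m0 /= => /eqP.
apply: (part1 x (Alp x Ax)); apply: Afhc => //.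
by have := Axm m.-1; rewrite prednK.
Qed.
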